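(* Let $\mathcal C$ be a small cylinder category. A morphism of $\mathcal C$ is a weak equivalence in $\mathcal C$ if and only if (its Yoneda image) is a weak equivalence in $\widetilde{\mathcal C}$.
   Context: A cylinder category is a category $\mathcal C$ with two classes of morphisms, the cofibrations and the weak equivalences (morphisms in both classes are called trivial cofibrations), such that: (1) both classes contain all isomorphisms and are closed under composition; (2) weak equivalences satisfy 2-out-of-6: if $f,g,h$ are composable and $f\circ g$, $g\circ h$ are weak equivalences then $f,g,h,f\circ g\circ h$ are; (3) $\mathcal C$ has an initial object $0$ and every $0\to X$ is a cofibration; (4) pushouts of cofibrations along arbitrary maps exist and are cofibrations; (5) pushouts of trivial cofibrations are trivial cofibrations; (6) for every object $X$ the codiagonal $X\sqcup X\to X$ factors as a cofibration $X\sqcup X\hookrightarrow IX$ followed by a weak equivalence $IX\to X$; (7) every trivial cofibration admits a retraction. For a cofibration $A\hookrightarrow B$, a relative cylinder object is a factorization $B\sqcup_A B\hookrightarrow I_AB\xrightarrow{\sim}B$ of the codiagonal into a cofibration followed by a weak equivalence. For a small cylinder category $\mathcal C$, $\widetilde{\mathcal C}$ is the category of presheaves of sets on $\mathcal C$ sending the initial object to a singleton and pushouts along cofibrations to pullbacks of sets; $\mathcal C$ is identified with its image under the Yoneda embedding. A morphism $f:X\to Y$ of $\widetilde{\mathcal C}$ is a weak equivalence if for every cofibration $i:A\hookrightarrow B$ of $\mathcal C$ and every commutative square with top $u:A\to X$ and bottom $w:B\to Y$ (so $f\circ u=w\circ i$), there exist $a:B\to X$ with $a\circ i=u$ and $h:I_AB\to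 Y$ for some relative cylinder object such that $h$ restricted along the two inclusions $B\to I_AB$ is $f\circ a$ and $w$. *)

(* Defs.v *)
Set Implicit Arguments.
Unset Strict Implicit.

Record Category := {
  Ob :> Type;
  Hom : Ob -> Ob -> Type;
  idm : forall X, Hom X X;
  comp : forall X Y Z, Hom Y Z -> Hom X Y -> Hom X Z;
  comp_id_l : forall X Y (f : Hom X Y), comp (idm Y) f = f;
  comp_id_r : forall X Y (f : Hom X Y), comp f (idm X) = f;
  comp_assoc : forall W X Y Z (h : Hom Y Z) (g : Hom X Y) (f : Hom W X),
      comp h (comp g f) = comp (comp h g) f
}.
Arguments Hom {c} _ _.
Arguments idm {c} X.
Arguments comp {c X Y Z} _ _.
(* [g ∘ f] is "first f, then g" *)
Notation "g ∘ f" := (comp g f) (at level 40, left associativity).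

Section CatDefs.
Variable C : Category.

Definition is_iso {X Y : C} (f : Hom X Y) : Prop :=
  exists g : Hom Y X, g ∘ f = idm X /\ f ∘ g = idm Y.

Definition is_initial (O : C) : Prop :=
  forall Y : C, exists f : Hom O Y, forall g : Hom O Y, g = f.

(* The commutative square  A --i--> B, A --f--> Cc, B --g--> D, Cc --k--> D
   is a pushout square (k is the pushout of i along f). *)
Definition is_pushout {A B Cc D : C} (i : Hom A B) (f : Hom A Cc)
    (g : Hom B D) (k : Hom Cc D) : Prop :=
  g ∘ i = k ∘ f /\
  forall (Z : C) (b : Hom B Z) (c : Hom Cc Z), b ∘ i = c ∘ f ->
    exists d : Hom D Z, (d ∘ g = b /\ d ∘ k = c) /\
      forall d' : Hom D Z, d' ∘ g = b /\ d' ∘ k = c -> d' = d.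
End CatDefs.

Record CylinderStructure (C : Category) := {
  cof : forall (X Y : C), Hom X Y -> Prop;
  weq : forall (X Y : C), Hom X Y -> Prop;
  cof_iso : forall (X Y : C) (f : Hom X Y), is_iso f -> cof f;
  weq_iso : forall (X Y : C) (f : Hom X Y), is_iso f -> weq f;
  cof_comp : forall (X Y Z : C) (f : Hom X Y) (g : Hom Y Z),
      cof f -> cof g -> cof (g ∘ f);
  weq_comp : forall (X Y Z : C) (f : Hom X Y) (g : Hom Y Z),
      weq f -> weq g -> weq (g ∘ f);
  weq_2of6 : forall (W X Y Z : C) (h : Hom W X) (g : Hom X Y) (f : Hom Y Z),
      weq (f ∘ g) -> weq (g ∘ h) ->
      weq f /\ weq g /\ weq h /\ weq (f ∘ g ∘ h);
  init : C;
  init_initial : is_initial init;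
  cof_init : forall (X : C) (e : Hom init X), cof e;
  pushout_exists : forall (A B Cc : C) (i : Hom A B) (f : Hom A Cc),
      cof i -> exists (D : C) (g : Hom B D) (k : Hom Cc D), is_pushout i f g k;
  pushout_cof : forall (A B Cc D : C) (i : Hom A B) (f : Hom A Cc)
      (g : Hom B D) (k : Hom Cc D), cof i -> is_pushout i f g k -> cof k;
  pushout_tcof : forall (A B Cc D : C) (i : Hom A B) (f : Hom A Cc)
      (g : Hom B D) (k : Hom Cc D), cof i -> weq i -> is_pushout i f g k ->
      cof k /\ weq k;
  (* (6) cylinders: for any coproduct X ⊔ X (pushout over the initial object)
     the codiagonal factors as a cofibration followed by a weak equivalence *)
  cylinder : forall (X : C) (e : Hom init X) (P : C) (j1 j2 : Hom X P),
      is_pushout e e j1 j2 ->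
      exists (I : C) (c : Hom P I) (p : Hom I X),
        cof c /\ weq p /\ p ∘ c ∘ j1 = idm X /\ p ∘ c ∘ j2 = idm X;
  tcof_retraction : forall (X Y : C) (i : Hom X Y), cof i -> weq i ->
      exists r : Hom Y X, r ∘ i = idm X
}.
Arguments cof {C} c {X Y} _.
Arguments weq {C} c {X Y} _.
Arguments init {C} c.

(* Relative cylinder object for a cofibration i : A -> B:
   B ⊔_A B (a pushout (P, j1, j2) of i along i) --c--> I --p--> B,
   c a cofibration, p a weak equivalence, p ∘ c the codiagonal.
   The two inclusions B -> I are c ∘ j1 and c ∘ j2. *)
Definition is_rel_cylinder {C : Category} (S : CylinderStructure C)
    {A B P I : C} (i : Hom A B) (j1 j2 : Hom B P) (c : Hom P I) (p : Hom I B)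
    : Prop :=
  is_pushout i i j1 j2 /\ cof S c /\ weq S p /\
  p ∘ c ∘ j1 = idm B /\ p ∘ c ∘ j2 = idm B.

Record Presheaf (C : Category) := {
  pob : C -> Type;
  pmap : forall (X Y : C), Hom X Y -> pob Y -> pob X;
  pmap_id : forall (X : C) (x : pob X), pmap (idm X) x = x;
  pmap_comp : forall (X Y Z : C) (f : Hom X Y) (g : Hom Y Z) (x : pob Z),
      pmap (g ∘ f) x = pmap f (pmap g x)
}.
Arguments pob {C} _ _.
Arguments pmap {C} _ {X Y} _ _.

Record NatTrans {C : Category} (P Q : Presheaf C) := {
  ntc : forall {X : C}, pob P X -> pob Q X;
  ntnat : forall (X Y : C) (f : Hom X Y) (x : pob P Y),
      ntc (pmap P f x) = pmap Q f (ntc x)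
}.
Arguments ntc {C P Q} _ X _.

Definition nt_comp {C : Category} {P Q R : Presheaf C}
    (b : NatTrans Q R) (a : NatTrans P Q) : NatTrans P R.
Proof.
  refine {| ntc := fun X x => ntc b X (ntc a X x) |}.
  intros X Y f x. rewrite (ntnat a), (ntnat b). reflexivity.
Defined.

Definition nt_eq {C : Category} {P Q : Presheaf C} (a b : NatTrans P Q) : Prop :=
  forall (X : C) (x : pob P X), ntc a X x = ntc b X x.

Definition yoneda {C : Category} (X : C) : Presheaf C.
Proof.
  refine {| pob := fun A => Hom A X; pmap := fun A B f g => g ∘ f |}.
  - intros A g. apply comp_id_r.
  - intros A B D f g h. apply comp_assoc.
Defined.

Definition ymap {C : Category} {X Y : C} (f : Hom X Y) :
    NatTrans (yoneda X) (yoneda Y).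
Proof.
  refine {| ntc := fun A (g : pob (yoneda X) A) => (f ∘ g : pob (yoneda Y) A) |}.
  intros A B h g. simpl. apply comp_assoc.
Defined.

(* Objects of C~: presheaves sending the initial object to a singleton and
   pushouts along cofibrations to pullbacks of sets; morphisms are all
   natural transformations (full subcategory). *)
Definition in_Ctilde {C : Category} (S : CylinderStructure C) (P : Presheaf C)
    : Prop :=
  (exists x : pob P (init S), forall y, y = x) /\
  forall (A B Cc D : C) (i : Hom A B) (f : Hom A Cc) (g : Hom B D) (k : Hom Cc D),
    cof S i -> is_pushout i f g k ->
    forall (b : pob P B) (c : pob P Cc), pmap P i b = pmap P f c ->
      exists d : pob P D, (pmap P g d = b /\ pmap P k d = c) /\
        forall d', pmap P g d' = b /\ pmap P k d' = c -> d' = d.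

(* Weak equivalences of C~ (maps out of representables y A are the
   natural transformations y A => P). *)
Definition ctilde_weq {C : Category} (S : CylinderStructure C)
    {P Q : Presheaf C} (alpha : NatTrans P Q) : Prop :=
  forall (A B : C) (i : Hom A B), cof S i ->
  forall (u : NatTrans (yoneda A) P) (w : NatTrans (yoneda B) Q),
    nt_eq (nt_comp alpha u) (nt_comp w (ymap i)) ->
    exists a : NatTrans (yoneda B) P,
      nt_eq (nt_comp a (ymap i)) u /\
      exists (Pb I : C) (j1 j2 : Hom B Pb) (c : Hom Pb I) (p : Hom I B)
             (h : NatTrans (yoneda I) Q),
        is_rel_cylinder S i j1 j2 c p /\
        nt_eq (nt_comp h (ymap (c ∘ j1))) (nt_comp alpha a) /\
        nt_eq (nt_comp h (ymap (c ∘ j2))) w.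

Lemma yoneda_in_Ctilde {C : Category} (S : CylinderStructure C) (X : C) :
  in_Ctilde S (yoneda X).
Proof.
  split.
  - destruct (init_initial S X) as [e He]. exists e. exact He.
  - intros A B Cc D i f g k _ [Hsq HU] b c Hbc. simpl in *.
    destruct (HU X b c Hbc) as [d [Hd Hu]]. exists d. split; auto.
Qed.

(* Main.v *)
Require Import Defs.

Ltac rn := repeat rewrite <- comp_assoc; repeat rewrite comp_id_l; repeat rewrite comp_id_r.

Lemma pre {C : Category} {X Y Y' Z W : C} {a : Hom Y Z} {b : Hom X Y}
  {c : Hom Y' Z} {d : Hom X Y'} (E : a ∘ b = c ∘ d) (x : Hom W X) :
  a ∘ (b ∘ x) = c ∘ (d ∘ x).
Proof. rewrite !comp_assoc, E. reflexivity. Qed.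

Lemma pre_id {C : Category} {X Y W : C} {a : Hom Y X} {b : Hom X Y}
  (E : a ∘ b = idm X) (x : Hom W X) : a ∘ (b ∘ x) = x.
Proof. rewrite comp_assoc, E, comp_id_l. reflexivity. Qed.

Lemma pre3_id {C : Category} {X Y Y2 W : C} {a : Hom Y X} {b : Hom Y2 Y} {e : Hom X Y2}
  (E : a ∘ (b ∘ e) = idm X) (x : Hom W X) : a ∘ (b ∘ (e ∘ x)) = x.
Proof. rewrite !comp_assoc. rewrite <- (comp_assoc a b e), E, comp_id_l. reflexivity. Qed.

Lemma po_uniq {C : Category} {A B Cc D : C} {i : Hom A B} {f : Hom A Cc}
  {g : Hom B D} {k : Hom Cc D} (H : is_pushout i f g k) {Z : C} (d1 d2 : Hom D Z) :
  d1 ∘ g = d2 ∘ g -> d1 ∘ k = d2 ∘ k -> d1 = d2.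
Proof.
  intros E1 E2. destruct H as [Hc HU].
  destruct (HU Z (d2 ∘ g) (d2 ∘ k)) as [d [_ Hu]].
  { rn. rewrite Hc. reflexivity. }
  rewrite (Hu d1), (Hu d2); auto.
Qed.

Lemma po_ex {C : Category} {A B Cc D : C} {i : Hom A B} {f : Hom A Cc}
  {g : Hom B D} {k : Hom Cc D} (H : is_pushout i f g k) {Z : C} (b : Hom B Z) (c : Hom Cc Z) :
  b ∘ i = c ∘ f -> exists d : Hom D Z, d ∘ g = b /\ d ∘ k = c.
Proof.
  intros E. destruct H as [Hc HU]. destruct (HU Z b c E) as [d [Hd _]]. exists d; exact Hd.
Qed.

Lemma po_sym {C : Category} {A B Cc D : C} {i : Hom A B} {f : Hom A Cc}
  {g : Hom B D} {k : Hom Cc D} : is_pushout i f g k -> is_pushout f i k g.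
Proof.
  intros [Hc HU]. split; [symmetry; exact Hc|].
  intros Z b c E. destruct (HU Z c b (eq_sym E)) as [d [[H1 H2] Hu]].
  exists d. split; [split; auto|]. intros d' [E1 E2]. apply Hu; auto.
Qed.

Lemma init_uniq {C : Category} (S : CylinderStructure C) {Y : C} (a b : Hom (init S) Y) : a = b.
Proof. destruct (init_initial S Y) as [e He]. rewrite (He a), (He b). reflexivity. Qed.

Lemma weq_id {C : Category} (S : CylinderStructure C) (X : C) : weq S (idm X).
Proof. apply weq_iso. exists (idm X). split; apply comp_id_l. Qed.

Lemma w3_r {C : Category} (S : CylinderStructure C) {X Y Z : C} (h : Hom X Y) (g : Hom Y Z) :
  weq S (g ∘ h) -> weq S g -> weq S h.
Proof.
  intros Hgh Hg. destruct (weq_2of6 (c:=S) (h:=h) (g:=g) (f:=idm Z)) as [_ [_ [Hh _]]]; auto.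
  rewrite comp_id_l; auto.
Qed.

Lemma w3_l {C : Category} (S : CylinderStructure C) {X Y Z : C} (h : Hom X Y) (g : Hom Y Z) :
  weq S (g ∘ h) -> weq S h -> weq S g.
Proof.
  intros Hgh Hh. destruct (weq_2of6 (c:=S) (h:=idm X) (g:=h) (f:=g)) as [Hg _]; auto.
  rewrite comp_id_r; auto.
Qed.

Lemma sec_weq {C : Category} (S : CylinderStructure C) {X Y : C} (s : Hom X Y) (p : Hom Y X) :
  p ∘ s = idm X -> weq S p -> weq S s.
Proof. intros E Hp. apply (w3_r S s p); auto. rewrite E. apply weq_id. Qed.

Lemma factorization {C : Category} (S : CylinderStructure C) {U V : C} (φ : Hom U V) :
  exists (M : C) (k : Hom U M) (q : Hom M V), cof S k /\ weq S q /\ q ∘ k = φ.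
Proof.
  destruct (init_initial S U) as [eU _]. destruct (init_initial S V) as [eV _].
  destruct (pushout_exists eV (cof_init (c:=S) eU)) as [Q [iU [iV HQ]]].
  assert (HiU : cof S iU) by exact (pushout_cof (cof_init (c:=S) eV) (po_sym HQ)).
  destruct (pushout_exists eU (cof_init (c:=S) eU)) as [PU [J1 [J2 HP]]].
  destruct (cylinder HP) as [IU [cU [pU [HcU [HpU [H1 H2]]]]]].
  rewrite <- comp_assoc in H1, H2.
  destruct (po_ex HP iU (iV ∘ φ)) as [Φ [HΦ1 HΦ2]]; [apply init_uniq|].
  destruct (pushout_exists Φ HcU) as [M [g [k HM]]].
  assert (Hk : cof S k) by exact (pushout_cof HcU HM).
  destruct (po_ex HQ φ (idm V)) as [r0 [Hr1 Hr2]]; [apply init_uniq|].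
  assert (E : (φ ∘ pU) ∘ cU = r0 ∘ Φ).
  { apply (po_uniq HP).
    - rn. rewrite HΦ1, Hr1, H1. rewrite comp_id_r. reflexivity.
    - rn. rewrite HΦ2. rewrite (pre_id Hr2). rewrite H2. rewrite comp_id_r. reflexivity. }
  destruct (po_ex HM (φ ∘ pU) r0 E) as [q [Hq1 Hq2]].
  exists M, (k ∘ iU), q. split; [apply cof_comp; auto|]. split.
  2:{ rewrite comp_assoc, Hq2; exact Hr1. }
  assert (HJ2 : cof S J2) by exact (pushout_cof (cof_init (c:=S) eU) HP).
  assert (Hc2 : cof S (cU ∘ J2)) by (apply cof_comp; auto).
  assert (Hw2 : weq S (cU ∘ J2)).
  { apply (sec_weq S _ pU); [exact H2|exact HpU]. }
  assert (Hpo : is_pushout (cU ∘ J2) φ g (k ∘ iV)).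
  { destruct HM as [HMc HMu]. split.
    - rewrite comp_assoc, HMc. rn. rewrite HΦ2. reflexivity.
    - intros Z b d Hbd.
      destruct (po_ex HQ (b ∘ cU ∘ J1) d) as [r [Hr1' Hr2']]; [apply init_uniq|].
      assert (E2 : b ∘ cU = r ∘ Φ).
      { apply (po_uniq HP).
        - rn. rewrite HΦ1, Hr1'. rn. reflexivity.
        - rn. rewrite HΦ2, (comp_assoc r iV φ), Hr2'. exact Hbd. }
      destruct (HMu Z b r E2) as [m [[Hm1 Hm2] Hmu]].
      exists m. split; [split; auto; rewrite comp_assoc, Hm2; auto|].
      intros m' [Hm1' Hm2']. apply Hmu. split; auto.
      apply (po_uniq HQ).
      + rewrite Hr1'. rn. rewrite <- HΦ1. rewrite <- (pre HMc).
        rewrite (comp_assoc m' g), Hm1'. rn. reflexivity.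
      + rewrite <- comp_assoc. rewrite Hm2', Hr2'. reflexivity. }
  destruct (pushout_tcof Hc2 Hw2 Hpo) as [_ Hs].
  apply (w3_l S (k ∘ iV) q); auto.
  rewrite comp_assoc, Hq2, Hr2. apply weq_id.
Qed.

Lemma homotopy_lemma {C : Category} (S : CylinderStructure C) {X M P I : C}
  (t : Hom X M) (r : Hom M X) (j1 j2 : Hom M P) (c : Hom P I) (p : Hom I M) :
  cof S t -> weq S t -> r ∘ t = idm X -> is_rel_cylinder S t j1 j2 c p ->
  exists H : Hom I M, H ∘ (c ∘ j1) = t ∘ r /\ H ∘ (c ∘ j2) = idm M.
Proof.
  intros Ht Htw Hrt [HP [Hc [Hp [E1 E2]]]]. rewrite <- comp_assoc in E1, E2.
  destruct (po_ex HP (t ∘ r) (idm M)) as [σ [Hσ1 Hσ2]].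
  { rewrite <- comp_assoc, Hrt, comp_id_r, comp_id_l. reflexivity. }
  destruct (pushout_exists σ Hc) as [N [ν [μ HN]]].
  assert (Hμ : cof S μ) by exact (pushout_cof Hc HN).
  assert (Hj1 : cof S j1) by exact (pushout_cof Ht (po_sym HP)).
  assert (Hcj1 : cof S (c ∘ j1)) by (apply cof_comp; auto).
  assert (Hcj1w : weq S (c ∘ j1)) by (apply (sec_weq S _ p); auto).
  assert (Hpo : is_pushout (c ∘ j1) r ν (μ ∘ t)).
  { destruct HN as [HNc HNu]. pose proof (proj1 HP) as HPc. split.
    - rewrite comp_assoc, HNc, <- comp_assoc, Hσ1. apply comp_assoc.
    - intros Z b x Hbx.
      assert (Hm : b ∘ c = (b ∘ (c ∘ j2)) ∘ σ).
      { apply (po_uniq HP).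
        - rewrite <- (comp_assoc (b ∘ (c ∘ j2)) σ j1), Hσ1.
          rewrite <- comp_assoc, Hbx. rn. rewrite <- (pre HPc).
          rewrite (comp_assoc c j1), (comp_assoc b (c ∘ j1)), Hbx.
          rn. rewrite (pre_id Hrt). reflexivity.
        - rewrite <- (comp_assoc (b ∘ (c ∘ j2)) σ j2), Hσ2, comp_id_r. rn. reflexivity. }
      destruct (HNu Z b _ Hm) as [d [[Hd1 Hd2] Hdu]].
      exists d. split.
      + split; auto. rewrite comp_assoc, Hd2. rn. rewrite <- HPc.
        rewrite (comp_assoc c j1 t), (comp_assoc b (c ∘ j1) t), Hbx. rn.
        rewrite Hrt. apply comp_id_r.
      + intros d' [Hd1' Hd2']. apply Hdu. split; auto.
        rewrite <- (comp_id_r (d' ∘ μ)). rewrite <- Hσ2. rn.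
        rewrite <- (pre HNc). rewrite (comp_assoc d' ν), Hd1'. rn. reflexivity. }
  destruct (pushout_tcof Hcj1 Hcj1w Hpo) as [_ Hμt].
  assert (Hμw : weq S μ) by exact (w3_l S t μ Hμt Htw).
  destruct (tcof_retraction Hμ Hμw) as [ρ Hρ].
  exists (ρ ∘ ν). destruct HN as [HNc _]. split.
  - rn. rewrite (pre HNc). rewrite (comp_assoc ρ μ), Hρ, comp_id_l. exact Hσ1.
  - rn. rewrite (pre HNc). rewrite (comp_assoc ρ μ), Hρ, comp_id_l. exact Hσ2.
Qed.

Lemma relcyl_exists {C : Category} (S : CylinderStructure C) {A B : C} (i : Hom A B) :
  cof S i -> exists (P : C) (j1 j2 : Hom B P) (I : C) (c : Hom P I) (p : Hom I B),
    is_rel_cylinder S i j1 j2 c p.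
Proof.
  intros Hi. destruct (pushout_exists i Hi) as [P [j1 [j2 HP]]].
  destruct (po_ex HP (idm B) (idm B) eq_refl) as [n [Hn1 Hn2]].
  destruct (factorization S n) as [I [c [p [Hc [Hp Hpc]]]]].
  exists P, j1, j2, I, c, p. split; [exact HP|]. split; [exact Hc|]. split; [exact Hp|].
  rewrite Hpc. split; assumption.
Qed.

Lemma cyl_func {C : Category} (S : CylinderStructure C) {A B X M : C}
  (i : Hom A B) (t : Hom X M) (u0 : Hom A X) (v : Hom B M) :
  cof S i -> cof S t -> v ∘ i = t ∘ u0 ->
  exists (PB : C) (j1 j2 : Hom B PB) (IB : C) (cB : Hom PB IB) (pB : Hom IB B)
         (Pt : C) (k1 k2 : Hom M Pt) (It : C) (ct : Hom Pt It) (pt : Hom It M)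
         (λ : Hom IB It),
    is_rel_cylinder S i j1 j2 cB pB /\ is_rel_cylinder S t k1 k2 ct pt /\
    λ ∘ (cB ∘ j1) = ct ∘ (k1 ∘ v) /\ λ ∘ (cB ∘ j2) = ct ∘ (k2 ∘ v).
Proof.
  intros Hi Ht Hvi.
  destruct (relcyl_exists S i Hi) as [PB [j1 [j2 [IB [cB [pB [HPB [HcB [HpB [E1 E2]]]]]]]]]].
  rewrite <- comp_assoc in E1, E2.
  destruct (pushout_exists t Ht) as [Pt [k1 [k2 HPt]]].
  destruct (po_ex HPt (idm M) (idm M) eq_refl) as [nt [Hn1 Hn2]].
  destruct (po_ex HPB (k1 ∘ v) (k2 ∘ v)) as [φ [Hφ1 Hφ2]].
  { rn. rewrite Hvi. apply (pre (proj1 HPt)). }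
  destruct (pushout_exists φ HcB) as [I' [ι' [κ HI']]].
  assert (Hκ : cof S κ) by exact (pushout_cof HcB HI').
  destruct (po_ex HI' (v ∘ pB) nt) as [g [Hg1 Hg2]].
  { apply (po_uniq HPB).
    - rn. rewrite E1, comp_id_r, Hφ1, comp_assoc, Hn1, comp_id_l. reflexivity.
    - rn. rewrite E2, comp_id_r, Hφ2, comp_assoc, Hn2, comp_id_l. reflexivity. }
  destruct (factorization S g) as [It [c' [p' [Hc' [Hp' Hpc']]]]].
  exists PB, j1, j2, IB, cB, pB, Pt, k1, k2, It, (c' ∘ κ), p', (c' ∘ ι').
  split.
  { split; [exact HPB|]. split; [exact HcB|]. split; [exact HpB|].
    rewrite <- !comp_assoc. split; assumption. }
  split.
  { split; [exact HPt|]. split; [apply cof_comp; auto|]. split; [exact Hp'|].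
    rewrite (comp_assoc p' c' κ), Hpc', Hg2. split; assumption. }
  destruct HI' as [HIc _].
  split; rn; rewrite (pre HIc); [rewrite <- Hφ1|rewrite <- Hφ2]; rn; reflexivity.
Qed.

Lemma yon {C : Category} {A X : C} (u : NatTrans (yoneda A) (yoneda X)) (Z : C) (x : Hom Z A) :
  ntc u Z x = ntc u A (idm A) ∘ x.
Proof.
  pose proof (ntnat u x (idm A)) as E. simpl in E. rewrite comp_id_l in E. exact E.
Qed.

Theorem mainTheorem8 (C : Category) (S : CylinderStructure C)
    (X Y : C) (f : Hom X Y) :
  weq S f <-> ctilde_weq S (ymap f).
Proof.
  split.
  - intros Hf A B i Hi u w Huw.
    set (u0 := ntc u A (idm A)). set (w0 := ntc w B (idm B)).
    assert (Hsq : w0 ∘ i = f ∘ u0).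
    { pose proof (Huw A (idm A)) as E. simpl in E. rewrite (yon w), comp_id_r in E.
      symmetry; exact E. }
    destruct (pushout_exists u0 Hi) as [D [β [ιX HD]]].
    assert (HιX : cof S ιX) by exact (pushout_cof Hi HD).
    destruct (po_ex HD w0 f Hsq) as [ψ [Hψ1 Hψ2]].
    destruct (factorization S ψ) as [M [k [q [Hk [Hq Hqk]]]]].
    assert (Hqt : q ∘ (k ∘ ιX) = f) by (rewrite comp_assoc, Hqk; exact Hψ2).
    assert (Ht : cof S (k ∘ ιX)) by (apply cof_comp; auto).
    assert (Htw : weq S (k ∘ ιX)) by (apply (w3_r S _ q); auto; rewrite Hqt; auto).
    destruct (tcof_retraction Ht Htw) as [r Hr].
    assert (Hvi : (k ∘ β) ∘ i = (k ∘ ιX) ∘ u0).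
    { rn. rewrite (proj1 HD). reflexivity. }
    destruct (cyl_func S i (k ∘ ιX) u0 (k ∘ β) Hi Ht Hvi)
      as [PB [j1 [j2 [IB [cB [pB [Pt [k1 [k2 [It [ct [pt [lam [HcylB [Hcylt [L1 L2]]]]]]]]]]]]]]]].
    destruct (homotopy_lemma S (k ∘ ιX) r k1 k2 ct pt Ht Htw Hr Hcylt) as [H [H1 H2]].
    exists (ymap (r ∘ (k ∘ β))). split.
    + intros Z x. simpl. rewrite (yon u). fold u0. rn.
      rewrite (pre (proj1 HD)). rewrite (comp_assoc k ιX), (comp_assoc r (k ∘ ιX)), Hr.
      rewrite comp_id_l. reflexivity.
    + exists PB, IB, j1, j2, cB, pB, (ymap (q ∘ (H ∘ lam))). split; [exact HcylB|]. split.
      * intros Z x. simpl. rn. rewrite (comp_assoc cB j1), (pre L1). rn.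
        rewrite (comp_assoc ct k1), (pre H1). rn.
        rewrite (comp_assoc k ιX), (comp_assoc q (k ∘ ιX)), Hqt. reflexivity.
      * intros Z x. simpl. rewrite (yon w). fold w0. rn. rewrite (comp_assoc cB j2), (pre L2). rn.
        rewrite (comp_assoc ct k2), (pre_id H2). rewrite (comp_assoc q k), Hqk.
        rewrite comp_assoc, Hψ1. reflexivity.
  - intros Hw.
    destruct (factorization S f) as [M [t [q [Ht [Hq Hqt]]]]].
    destruct (Hw X M t Ht (ymap (idm X)) (ymap q)) as [a [Ea [Pb [I [j1 [j2 [c [p [h [Hcyl [Eh1 Eh2]]]]]]]]]]].
    { intros Z x. simpl. rewrite comp_id_l, comp_assoc, Hqt. reflexivity. }
    pose proof (Ea X (idm X)) as Ea'. simpl in Ea'. rewrite (yon a), comp_id_r, comp_id_l in Ea'.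
    pose proof (Eh1 M (idm M)) as Eh1'. simpl in Eh1'. rewrite (yon h), comp_id_r in Eh1'.
    pose proof (Eh2 M (idm M)) as Eh2'. simpl in Eh2'. rewrite (yon h), !comp_id_r in Eh2'.
    destruct Hcyl as [_ [_ [Hp [E1 E2]]]]. rewrite <- comp_assoc in E1, E2.
    assert (Hc1 : weq S (c ∘ j1)) by (apply (sec_weq S _ p); auto).
    assert (Hc2 : weq S (c ∘ j2)) by (apply (sec_weq S _ p); auto).
    assert (Hh : weq S (ntc h I (idm I))) by (apply (w3_l S (c ∘ j2)); auto; rewrite Eh2'; auto).
    assert (Hfa : weq S (f ∘ ntc a M (idm M))) by (rewrite <- Eh1'; apply weq_comp; auto).
    destruct (weq_2of6 (c:=S) (h:=t) (g:=ntc a M (idm M)) (f:=f)) as [Hf _]; auto.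
    rewrite Ea'. apply weq_id.
Qed.
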